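(* Let $q$ be a prime power, $n$ a positive integer with $\gcd(q,n)=1$, $P\subseteq\mathbb{Z}_n$ a $\mu_q$-invariant subset, $s\in\mathbb{Z}_n^*$ and $t\in\mathbb{Z}_n$ with $qt\equiv t\pmod n$. Then $\varphi_{s,t}(C_P)=C_{\rho_{s,t}(P)}$.
   Context: $R_n=\mathbb{F}_q[X]/\langle X^n-1\rangle$; cyclic codes are ideals of $R_n$. Fix a primitive $n$-th root of unity $\theta$ in an extension of $\mathbb{F}_q$. $\mu_q:\mathbb{Z}_n\to\mathbb{Z}_n$, $i\mapsto qi\bmod n$; $P$ is $\mu_q$-invariant if $\mu_q(P)=P$. For such $P$, $f_P(X)=\prod_{i\in P}(X-\theta^i)\in\mathbb{F}_q[X]$ and $C_P$ is the ideal of $R_n$ generated by $(X^n-1)/f_P(X)$ (the cyclic code with check polynomial $f_P$). $\rho_{s,t}:\mathbb{Z}_n\to\mathbb{Z}_n$, $i\mapsto s(i+t)\bmod n$ (it maps $\mu_q$-invariant sets to $\mu_q$-invariant sets). $\varphi_{s,t}:R_n\to R_n$, $a(X)\mapsto a(\theta^{-t}X^{s^{-1}})\bmod(X^n-1)$, where $s^{-1}$ is a positive integer with $ss^{-1}\equiv1\pmod n$ (note $\theta^{-t}\in\mathbb{F}_q$). *)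

(* Defs.v *)
From HB Require Import structures.
From mathcomp Require Import all_boot all_order all_algebra all_field.
Set Implicit Arguments. Unset Strict Implicit. Unset Printing Implicit Defensive.
Import GRing.Theory.
Local Open Scope ring_scope.

(* Z_n is represented by 'I_n (n > 0 follows from inhabitation). *)
Lemma ord_gt0 (n : nat) (i : 'I_n) : (0 < n)%N.
Proof. exact: leq_ltn_trans (leq0n i) (ltn_ord i). Qed.

(* k mod n as an element of 'I_n, given a witness i : 'I_n that n > 0 *)
Definition modI (n : nat) (i : 'I_n) (k : nat) : 'I_n :=
  Ordinal (ltn_pmod k (ord_gt0 i)).

Definition mu (q n : nat) (i : 'I_n) : 'I_n := modI i (q * i).

Definition mu_invariant (q n : nat) (P : {set 'I_n}) : Prop :=
  [set mu q i | i in P] = P.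

Definition rho (n : nat) (s t : 'I_n) (i : 'I_n) : 'I_n := modI i (s * (i + t)).

Definition rho_set (n : nat) (s t : 'I_n) (P : {set 'I_n}) : {set 'I_n} :=
  [set rho s t i | i in P].

Definition fP (F : fieldType) (L : fieldExtType F) (n : nat) (theta : L)
    (P : {set 'I_n}) : {poly L} :=
  \prod_(i in P) ('X - (theta ^+ i)%:P).

(* Elements of R_n = F_q[X]/<X^n - 1> are represented by their reduced
   representatives (polynomials of size <= n).  C_P is the ideal generated by
   h = (X^n - 1)/f_P, where h is an F_q-polynomial with h * f_P = X^n - 1. *)
Definition code (F : fieldType) (L : fieldExtType F) (n : nat) (theta : L)
    (P : {set 'I_n}) (a : {poly F}) : Prop :=
  exists h b : {poly F},
    map_poly (in_alg L) h * fP theta P = 'X^n - 1 /\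
    a = (b * h) %% ('X^n - 1).

(* phi_{s,t}(a)(X) = a(c X^{s'}) mod (X^n - 1), where c = theta^{-t} in F_q
   and s' = s^{-1} (a positive integer). *)
Definition phi (F : fieldType) (n : nat) (c : F) (s' : nat) (a : {poly F})
  : {poly F} :=
  (a \Po (c *: 'X^s')) %% ('X^n - 1).

(* Main.v *)
Require Import Defs.
From HB Require Import structures.
From mathcomp Require Import all_boot all_order all_algebra all_field.
From mathcomp Require Import zify.
Import GRing.Theory.
Local Open Scope ring_scope.

Lemma prim_inj {L : fieldType} {n} {th : L} {i j : 'I_n} :
  n.-primitive_root th -> th ^+ i = th ^+ j -> i = j.
Proof.
move=> pr /eqP; rewrite (eq_prim_root_expr pr) !modn_small // => /eqP.
exact: val_inj.
Qed.

Lemma fP_neq0_at (F : fieldType) (L : fieldExtType F) n (th : L) (Q : {set 'I_n}) (j : 'I_n) :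
  n.-primitive_root th -> j \notin Q -> (fP th Q).[th ^+ j] != 0.
Proof.
move=> pr jQ; rewrite /fP horner_prod; apply/prodf_neq0 => i iQ.
rewrite hornerXsubC subr_eq0; apply/eqP => /(prim_inj pr) eji.
by move: jQ; rewrite eji iQ.
Qed.

Lemma Xn1_root (F : fieldType) (L : fieldExtType F) n (th : L) k :
  n.-primitive_root th -> (map_poly (in_alg L) ('X^n - 1)).[th ^+ k] = 0.
Proof.
move=> pr; rewrite rmorphB /= map_polyXn rmorph1 hornerD hornerN hornerXn hornerC.
by rewrite -exprM mulnC exprM (prim_expr_order pr) expr1n subrr.
Qed.

Lemma modeval (F : fieldType) (L : fieldExtType F) n (th : L) (p : {poly F}) k :
  n.-primitive_root th ->
  (map_poly (in_alg L) (p %% ('X^n - 1))).[th ^+ k] = (map_poly (in_alg L) p).[th ^+ k].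
Proof.
move=> pr; rewrite map_modp.
rewrite [in RHS](divp_eq (map_poly (in_alg L) p) (map_poly (in_alg L) ('X^n - 1))).
by rewrite hornerD hornerM (Xn1_root _ _ _ _ k pr) mulr0 add0r.
Qed.

Lemma mapXn1 (F : fieldType) (L : fieldExtType F) n :
  map_poly (in_alg L) ('X^n - 1 : {poly F}) = 'X^n - 1.
Proof. by rewrite rmorphB /= map_polyXn rmorph1. Qed.

Lemma Xn1_rootL (L : fieldType) n (th : L) k :
  n.-primitive_root th -> ('X^n - 1 : {poly L}).[th ^+ k] = 0.
Proof.
move=> pr; rewrite hornerD hornerN hornerXn hornerC.
by rewrite -exprM mulnC exprM (prim_expr_order pr) expr1n subrr.
Qed.

Lemma uniq_eval (F : fieldType) (L : fieldExtType F) n (th : L) (p r : {poly F}) :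
  n.-primitive_root th -> (size p <= n)%N -> (size r <= n)%N ->
  (forall k : 'I_n, (map_poly (in_alg L) p).[th ^+ k] = (map_poly (in_alg L) r).[th ^+ k]) ->
  p = r.
Proof.
move=> pr sp sr E; apply/eqP; rewrite -subr_eq0; apply/negPn/negP => nz.
have dnz : map_poly (in_alg L) (p - r) != 0 by rewrite map_poly_eq0.
have H : (n < size (p - r)%R)%N.
  rewrite -(size_map_poly (in_alg L)) -[X in (X < _)%N](card_ord n) cardE.
  rewrite -(size_map (fun k : 'I_n => th ^+ k)).
  apply: max_poly_roots => //.
    apply/allP => x /mapP [k _ ->]; rewrite /root rmorphB hornerD hornerN E subrr //.
  rewrite map_inj_uniq ?enum_uniq // => i j; exact: prim_inj pr.
move: H; rewrite ltnNge (leq_trans (size_polyD _ _)) // size_polyN geq_max sp sr //=.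
Qed.

Lemma Xn1_prod (L : fieldType) n (th : L) :
  n.-primitive_root th -> ('X^n - 1 : {poly L}) = \prod_(j < n) ('X - (th ^+ j)%:P).
Proof. by move=> pr; rewrite -(factor_Xn_sub_1 pr) big_mkord. Qed.

Lemma code_char (F : fieldType) (L : fieldExtType F) n (th : L) (Q : {set 'I_n}) (a : {poly F}) :
  (0 < n)%N -> n.-primitive_root th ->
  (exists h : {poly F}, map_poly (in_alg L) h * fP th Q = 'X^n - 1) ->
  code th Q a <-> ((size a <= n)%N /\
     forall j : 'I_n, j \notin Q -> (map_poly (in_alg L) a).[th ^+ j] = 0).
Proof.
move=> n0 pr [h0 Hh0].
have sm : size ('X^n - 1 : {poly F}) = n.+1 by rewrite size_Xn_sub_1.
have m0 : ('X^n - 1 : {poly F}) != 0 by rewrite -size_poly_gt0 sm.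
split.
- case=> h [b [Hh ->]]; split.
    by rewrite -ltnS -sm ltn_modp.
  move=> j jQ; rewrite modeval // rmorphM hornerM.
  have: (map_poly (in_alg L) h).[th ^+ j] * (fP th Q).[th ^+ j] = 0.
    by rewrite -hornerM Hh (Xn1_rootL _ _ _ _ pr).
  by move/eqP; rewrite mulf_eq0 (negbTE (fP_neq0_at _ _ _ _ _ _ pr jQ)) orbF => /eqP->; rewrite mulr0.
- case=> sa Ha; exists h0, (a %/ h0); split => //.
  have fP0 : fP th Q != 0 by apply: monic_neq0; apply: monic_prod_XsubC.
  have Eh : map_poly (in_alg L) h0 = \prod_(j in ~: Q) ('X - (th ^+ j)%:P).
    apply: (mulIf fP0); rewrite Hh0 (Xn1_prod _ _ _ pr) /fP mulrC.
    rewrite (bigID (mem Q)) /=; congr (_ * _); apply: eq_bigl => j; by rewrite inE.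
  have dv : h0 %| a.
    rewrite -(dvdp_map (in_alg L)) Eh -big_enum /=.
    rewrite -(big_map (fun j : 'I_n => th ^+ j) xpredT (fun z => 'X - z%:P)).
    apply: uniq_roots_dvdp.
      apply/allP => x /mapP [j]; rewrite mem_enum inE => jQ ->.
      by rewrite /root Ha.
    rewrite uniq_rootsE map_inj_uniq ?enum_uniq // => i j; exact: prim_inj pr.
  by rewrite divpK // modp_small // sm.
Qed.

Lemma fixed_in1 (F : finFieldType) (L : fieldExtType F) (x : L) :
  x ^+ #|F| = x -> x \in 1%VS.
Proof.
move=> xq; apply/negPn/negP => x1.
have q1 : (1 < #|F|)%N := finNzRing_gt1 F.
pose P : {poly L} := 'X^#|F| - 'X.
have sP : size P = (#|F|).+1.
  by rewrite /P size_polyDl ?size_polyXn // size_polyN size_polyX ltnS.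
have P0 : P != 0 by rewrite -size_poly_gt0 sP.
pose rs := x :: [seq in_alg L c | c <- enum F].
have A : all (root P) rs.
  apply/andP; split.
    by rewrite /root /P hornerD hornerN hornerXn hornerX xq subrr.
  apply/allP => y /mapP [c _ ->].
  by rewrite /root /P hornerD hornerN hornerXn hornerX -rmorphXn expf_card subrr.
have U : uniq rs.
  rewrite /= map_inj_uniq ?enum_uniq ?andbT; last exact: (fmorph_inj (in_alg L)).
  apply/mapP => [[c _ xc]]; move/negP: x1; apply; rewrite xc /=.
  by rewrite memvZ // memv_line.
have := max_poly_roots P0 A U.
by rewrite /= size_map -cardE sP ltnn.
Qed.

Definition frobq (F : finFieldType) (L : fieldExtType F) (x : L) : L := x ^+ #|F|.

Lemma pnat_card (F : finFieldType) (L : fieldExtType F) : [pchar L].-nat #|F|.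
Proof.
have [p pr pF] := finPcharP F.
have pL : p \in [pchar L] by rewrite pchar_lalg.
rewrite (eq_pnat _ (pcharf_eq pL)).
have := pprimeChar_pgroup pF; rewrite /pgroup.pgroup cardsT.
done.
Qed.

Lemma frobq_nmod (F : finFieldType) (L : fieldExtType F) : nmod_morphism (frobq F L).
Proof.
split; first by rewrite /frobq expr0n; case: #|F| (finNzRing_gt1 F).
by move=> x y; rewrite /frobq exprDn_pchar // pnat_card.
Qed.

Lemma frobq_mon (F : finFieldType) (L : fieldExtType F) : monoid_morphism (frobq F L).
Proof.
split; first by rewrite /frobq expr1n.
by move=> x y; rewrite /frobq exprMn.
Qed.

HB.instance Definition _ (F : finFieldType) (L : fieldExtType F) :=
  GRing.isNmodMorphism.Build L L (frobq F L) (frobq_nmod F L).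
HB.instance Definition _ (F : finFieldType) (L : fieldExtType F) :=
  GRing.isMonoidMorphism.Build L L (frobq F L) (frobq_mon F L).

Lemma fP_over (F : finFieldType) (L : fieldExtType F) n (th : L) (Q : {set 'I_n}) :
  (0 < n)%N -> n.-primitive_root th -> mu_invariant #|F| Q ->
  exists h : {poly F}, map_poly (in_alg L) h * fP th Q = 'X^n - 1.
Proof.
move=> n0 pr inv.
have inj : {in Q &, injective (@mu #|F| n)}.
  by apply/imset_injP; rewrite inv.
have fx : map_poly (frobq F L) (fP th Q) = fP th Q.
  rewrite /fP rmorph_prod /=.
  have E := @big_imset _ 1 *%R _ _ _ _ (fun j : 'I_n => 'X - (th ^+ j)%:P) inj.
  rewrite inv in E; rewrite E; apply: eq_bigr => i _.
  by rewrite map_polyXsubC /=; congr ('X - _%:P); rewrite /frobq -exprM /mu /modI /= prim_expr_mod // mulnC //.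
have over : fP th Q \is a polyOver 1%VS.
  apply/polyOverP => i; apply: fixed_in1.
  by have := congr1 (fun p : {poly L} => p`_i) fx; rewrite coef_map.
case/polyOver1P: over => f Ef.
exists (('X^n - 1) %/ f).
rewrite map_divp mapXn1 -Ef divpK //.
rewrite (Xn1_prod _ _ _ pr) (bigID (mem Q)) /=.
by apply: dvdp_mulr; apply: dvdpp.
Qed.

Lemma comp_eval (F : fieldType) (L : fieldExtType F) n (th : L) (a : {poly F}) (d : F) e k :
  n.-primitive_root th ->
  (map_poly (in_alg L) ((a \Po (d *: 'X^e)) %% ('X^n - 1))).[th ^+ k] =
  (map_poly (in_alg L) a).[in_alg L d * th ^+ (k * e)].
Proof.
move=> pr; rewrite modeval // map_comp_poly horner_comp map_polyZ map_polyXn.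
by rewrite hornerZ hornerXn -exprM.
Qed.

Lemma modn_ss' (n s s' x : nat) : (s * s' = 1 %[mod n])%N -> (x * (s * s') = x %[mod n])%N.
Proof. by move=> H; rewrite -modnMmr H modnMmr muln1. Qed.

Lemma rho_inj n (s t : 'I_n) s' : (s * s' = 1 %[mod n])%N -> injective (rho s t).
Proof.
move=> Hss i j /(congr1 val) /= E.
have E2 : ((i + t) * (s * s') = (j + t) * (s * s') %[mod n])%N.
  have R : forall x, ((x * (s * s')) = s' * (s * x))%N by move=> x; lia.
  by rewrite !R -modnMmr E modnMmr.
rewrite !modn_ss' // in E2.
apply: val_inj; move/eqP: E2; rewrite eqn_modDr !modn_small // => /eqP E3; exact: E3.
Qed.

Lemma rho_inv (q n : nat) (P : {set 'I_n}) (s t : 'I_n) :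
  mu_invariant q P -> (q * t = t %[mod n])%N -> mu_invariant q (rho_set s t P).
Proof.
move=> inv Hqt; rewrite /mu_invariant /rho_set -imset_comp.
have E : forall i, (@mu q n \o rho s t) i = (rho s t \o @mu q n) i.
  move=> i; apply: val_inj; rewrite /= /mu /rho /modI /=.
  rewrite modnMmr -[in RHS]modnMmr modnDml modnMmr.
  have -> : (q * (s * (i + t)) = s * (q * i + q * t))%N by lia.
  by rewrite -modnMmr -modnDmr Hqt modnDmr modnMmr.
rewrite (eq_imset _ E) imset_comp inv //.
Qed.

Lemma th_neq0 (L : fieldType) n (th : L) : n.-primitive_root th -> th != 0.
Proof.
move=> pr; apply/eqP => th0; have := prim_expr_order pr.
by rewrite th0 expr0n eqn0Ngt (prim_order_gt0 pr) /= => /eqP; rewrite eq_sym oner_eq0.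
Qed.

Theorem theorem2p10 (F : finFieldType) (L : fieldExtType F) (n : nat)
    (theta : L) (P : {set 'I_n}) (s t : 'I_n) (c : F) (s' : nat) :
  (0 < n)%N ->
  coprime #|F| n ->
  n.-primitive_root theta ->
  mu_invariant #|F| P ->
  coprime s n ->
  (#|F| * t = t %[mod n])%N ->
  in_alg L c = theta ^- t ->
  (0 < s')%N -> (s * s' = 1 %[mod n])%N ->
  forall a : {poly F},
    code theta (rho_set s t P) a <-> exists b, code theta P b /\ a = phi n c s' b.
Proof.
move=> n0 cop pr inv cs Hqt Hc s0 Hss a.
have tn : (t <= n)%N := ltnW (ltn_ord t).
have th0 := th_neq0 _ _ _ pr.
have Hct : in_alg L c = theta ^+ (n - t).
  rewrite Hc -[theta ^- t]mul1r -(prim_expr_order pr) -{1}(subnK tn) exprD.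
  by rewrite mulrK // unitfE expf_neq0.
have hP := fP_over _ _ _ _ _ n0 pr inv.
have hR := fP_over _ _ _ _ _ n0 pr (rho_inv _ _ _ s _ inv Hqt).
have rinj := rho_inj _ s t _ Hss.
have sm : size ('X^n - 1 : {poly F}) = n.+1 by rewrite size_Xn_sub_1.
have m0 : ('X^n - 1 : {poly F}) != 0 by rewrite -size_poly_gt0 sm.
have szmod : forall p : {poly F}, (size (p %% ('X^n - 1))%R <= n)%N.
  by move=> p; rewrite -ltnS -sm ltn_modp.
rewrite (code_char _ _ _ _ _ _ n0 pr hR); split.
- case=> sa Ha.
  pose d : F := c^-1 ^+ s.
  have Hd : in_alg L d = theta ^+ (t * s).
    have -> : in_alg L d = (in_alg L c)^-1 ^+ s by rewrite /d rmorphXn fmorphV.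
    by rewrite Hc invrK -exprM.
  pose b := (a \Po (d *: 'X^s)) %% ('X^n - 1).
  exists b; split.
    apply/(code_char _ _ _ _ _ _ n0 pr hP); split; first exact: szmod.
    move=> j jP; rewrite comp_eval // Hd -exprD -(prim_expr_mod pr).
    have -> : ((t * s + j * s) %% n)%N = rho s t j.
      by rewrite /rho /modI /=; congr (_ %% _)%N; lia.
    apply: Ha; by rewrite /rho_set mem_imset.
  apply: (uniq_eval _ _ _ _ _ _ pr) => //; first exact: szmod.
  move=> k; rewrite /phi comp_eval // Hct -exprD comp_eval // Hd -exprD.
  congr (_ .[ _ ]); apply/eqP; rewrite (eq_prim_root_expr pr).
  have -> : (t * s + (n - t + k * s') * s = s * n + k * (s * s'))%N by nia.
  by rewrite modnMDl modn_ss'.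
- case=> b [cb ->].
  move/(code_char _ _ _ _ _ _ n0 pr hP): cb => [sb Hb].
  split; first exact: szmod.
  move=> k kR; rewrite /phi comp_eval // Hct -exprD -(prim_expr_mod pr).
  pose j : 'I_n := Ordinal (ltn_pmod (n - t + k * s') n0).
  have -> : ((n - t + k * s') %% n)%N = j by [].
  apply: Hb; apply/negP => jP; move/negP: kR; apply.
  have -> : k = rho s t j.
    apply: val_inj; rewrite /rho /modI /= -modnMmr modnDml modnMmr.
    have -> : (s * (n - t + k * s' + t) = s * n + k * (s * s'))%N by nia.
    by rewrite modnMDl modn_ss' // modn_small.
  by rewrite /rho_set mem_imset.
Qed.
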